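(* Let $G$ be a $2$-edge-connected graph and $e\in E(G)$. Then the inequality $x_e\le 1$ defines a facet of $\mathrm{TECSP}(G)$.
   Context: All graphs are finite, simple and undirected. An edge is a bridge if its removal increases the number of connected components. A graph is $2$-edge-connected if it is connected and has no bridges; the empty graph and a single vertex are $2$-edge-connected. $\chi^H\in\{0,1\}^{E(G)}$ is the incidence vector of $E(H)$, and $\mathrm{TECSP}(G)=\mathrm{conv}\{\chi^H : H\subseteq G\text{ is }2\text{-edge-connected}\}\subseteq\mathbb{R}^{E(G)}$. A facet is a face of dimension $\dim(\mathrm{TECSP}(G))-1$. *)

(* Defs.v *)
From HB Require Import structures.
From mathcomp Require Import all_boot all_order all_algebra.
Set Implicit Arguments. Unset Strict Implicit. Unset Printing Implicit Defensive.
Import Order.TTheory GRing.Theory Num.Theory.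
Local Open Scope ring_scope.

(* A finite simple graph on vertex type T : its edge set E is a set of
   2-element subsets of T ("simple": no loops, no multi-edges). *)
Definition simple_edges (T : finType) (E : {set {set T}}) : Prop :=
  forall f, f \in E -> #|f| = 2%N.

(* The edges of G, as a finite type (index set of R^{E(G)}). *)
Notation edges E := {f : {set _} | f \in E}.

Definition is_subgraph (T : finType) (E : {set {set T}}) (W : {set T})
  (F : {set {set T}}) : Prop :=
  F \subset E /\ forall f, f \in F -> f \subset W.

Definition adjg (T : finType) (W : {set T}) (F : {set {set T}}) : rel T :=
  fun x y => [&& x \in W, y \in W & [set x; y] \in F].

Definition components (T : finType) (W : {set T}) (F : {set {set T}}) :
  {set {set T}} :=
  [set [set y in W | connect (adjg W F) x y] | x in W].

Definition ncomp (T : finType) (W : {set T}) (F : {set {set T}}) : nat :=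
  #|components W F|.

Definition connected_graph (T : finType) (W : {set T}) (F : {set {set T}})
  : Prop :=
  W != set0 /\ forall x y, x \in W -> y \in W -> connect (adjg W F) x y.

Definition is_bridge (T : finType) (W : {set T}) (F : {set {set T}})
  (f : {set T}) : Prop :=
  f \in F /\ (ncomp W F < ncomp W (F :\ f))%N.

(* 2-edge-connected; the empty graph and single vertices are included. *)
Definition two_edge_connected (T : finType) (W : {set T})
  (F : {set {set T}}) : Prop :=
  W = set0 \/ (connected_graph W F /\ forall f, ~ is_bridge W F f).

Definition chi (R : nzRingType) (T : finType) (E : {set {set T}})
  (F : {set {set T}}) : {ffun edges E -> R} :=
  [ffun f => if val f \in F then 1 else 0].

Definition tec_edge_set (T : finType) (E : {set {set T}})
  (F : {set {set T}}) : Prop :=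
  exists W : {set T}, is_subgraph E W F /\ two_edge_connected W F.

Definition conv_hull (R : realFieldType) (V : lmodType R) (I : finType)
  (P : I -> Prop) (v : I -> V) : V -> Prop :=
  fun x => exists lam : I -> R,
    [/\ forall i, 0 <= lam i, forall i, ~ P i -> lam i = 0,
        \sum_i lam i = 1 & x = \sum_i lam i *: v i].

Definition TECSP (R : realFieldType) (T : finType) (E : {set {set T}})
  : {ffun edges E -> R^o} -> Prop :=
  @conv_hull R {ffun edges E -> R^o} {set {set T}} (tec_edge_set E) (@chi R T E).

Definition aff_indep (R : realFieldType) (V : lmodType R) (n : nat)
  (p : 'I_n -> V) : Prop :=
  forall c : 'I_n -> R, \sum_i c i = 0 -> \sum_i c i *: p i = 0 ->
    forall i, c i = 0.

Definition has_aff_indep (R : realFieldType) (V : lmodType R)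
  (P : V -> Prop) (n : nat) : Prop :=
  exists p : 'I_n -> V, (forall i, P (p i)) /\ aff_indep p.

(* dim P = d : the maximum number of affinely independent points of P is
   d + 1 (so the empty set has dimension -1). *)
Definition is_dim (R : realFieldType) (V : lmodType R) (P : V -> Prop)
  (d : int) : Prop :=
  exists n : nat, d = n%:Z - 1 /\ has_aff_indep P n /\ ~ has_aff_indep P n.+1.

Definition defines_facet (R : realFieldType) (V : lmodType R)
  (P : V -> Prop) (a : V -> R) (b : R) : Prop :=
  (forall x, P x -> a x <= b) /\
  exists d : int, is_dim P d /\ is_dim (fun x => P x /\ a x = b) (d - 1).

(* Main.v *)
Require Import Defs.
From HB Require Import structures.
From mathcomp Require Import all_boot all_order all_algebra.
From Stdlib Require Import ClassicalEpsilon.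
From mathcomp Require Import ring lra.
Import Order.TTheory GRing.Theory Num.Theory.

Module Aux.
Set Implicit Arguments. Unset Strict Implicit. Unset Printing Implicit Defensive.
Section Graph.
Variable T : finType.
Implicit Types (F A B H : {set {set T}}) (X W Z : {set T}) (x y z s t u v w a b : T).

Definition ad F : rel T := fun a b => [set a; b] \in F.
Definition cn F := connect (ad F).

Lemma set2C a b : [set a; b] = [set b; a] :> {set T}.
Proof. by rewrite setUC. Qed.

Lemma ad_sym F : symmetric (ad F).
Proof. by move=> a b; rewrite /ad set2C. Qed.

Lemma cn_sym F x y : cn F x y = cn F y x.
Proof. by rewrite /cn (sym_connect_sym (@ad_sym F)). Qed.

Lemma cn_trans F x y z : cn F x y -> cn F y z -> cn F x z.
Proof. exact: connect_trans. Qed.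

Lemma cn_refl F x : cn F x x.
Proof. exact: connect0. Qed.

Lemma cn1 F x y : [set x; y] \in F -> cn F x y.
Proof. by move=> h; apply: connect1. Qed.

Lemma cn_sub F F' x y : F \subset F' -> cn F x y -> cn F' x y.
Proof.
move=> sFF'; apply: connect_sub => a b h; apply: connect1.
by rewrite /ad (subsetP sFF').
Qed.

Lemma set2_eq a b c d : [set a; b] = [set c; d] :> {set T} ->
  (a = c /\ b = d) \/ (a = d /\ b = c).
Proof.
move=> h.
have ha : a \in [set c; d] by rewrite -h set21.
have hb : b \in [set c; d] by rewrite -h set22.
have hc : c \in [set a; b] by rewrite h set21.
have hd : d \in [set a; b] by rewrite h set22.
move: ha hb hc hd; rewrite !in_set2.
by case/orP=> /eqP-> ; case/orP=> /eqP-> ; case/orP=> /eqP ?; case/orP=> /eqP ?;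
  subst; auto.
Qed.

Lemma cn_reroute F f s t x y : f = [set s; t] -> cn (F :\ f) s t ->
  cn F x y -> cn (F :\ f) x y.
Proof.
move=> hf hst; apply: connect_sub x y => a b hab.
case: (boolP ([set a; b] == f)) => [/eqP|] h.
  rewrite hf in h; case: (set2_eq h) => [[-> ->]|[-> ->]] //.
  by move: hst; rewrite cn_sym.
by apply: connect1; rewrite /ad in_setD1 h.
Qed.

Definition verts A : {set T} := \bigcup_(f in A) f.

Lemma vertsP A f w : f \in A -> w \in f -> w \in verts A.
Proof. by move=> hf hw; apply/bigcupP; exists f. Qed.

Lemma vertsE A w : w \in verts A -> exists2 f, f \in A & w \in f.
Proof. by case/bigcupP=> f hf hw; exists f. Qed.

Definition TE W F := [/\ W != set0, (forall f, f \in F -> f \subset W),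
  (forall x y, x \in W -> y \in W -> cn F x y) &
  (forall f s t, f \in F -> f = [set s; t] -> cn (F :\ f) s t)].

Lemma adjgE W F : (forall f, f \in F -> f \subset W) -> adjg W F =2 ad F.
Proof.
move=> hW a b; rewrite /adjg /ad; apply/and3P/idP => [[]//|h].
by split=> //; apply: (subsetP (hW _ h)); rewrite ?set21 ?set22.
Qed.

Lemma ncomp1 W F : W != set0 -> (forall f, f \in F -> f \subset W) ->
  (forall x y, x \in W -> y \in W -> cn F x y) -> ncomp W F = 1%N.
Proof.
move=> hW hsub hc; rewrite /ncomp /components.
have -> : [set [set y in W | connect (adjg W F) x y] | x in W] = [set W].
  apply/setP=> C; rewrite inE; apply/imsetP/eqP => [[x hx ->]|->].
    apply/setP=> y; rewrite inE (eq_connect (adjgE hsub)).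
    by case: (boolP (y \in W)) => //= hy; apply: hc.
  case/set0Pn: hW => x hx; exists x => //; apply/setP=> y.
  rewrite inE (eq_connect (adjgE hsub)).
  by case: (boolP (y \in W)) => //= hy; have := hc x y hx hy.
by rewrite cards1.
Qed.

Lemma TE_tec W F : TE W F -> (forall f, f \in F -> #|f| = 2%N) ->
  two_edge_connected W F.
Proof.
case=> hW hsub hc hnb hsz; right; split.
  split=> // x y hx hy; rewrite (eq_connect (adjgE hsub)); exact: hc.
move=> f [hf]; rewrite (ncomp1 hW hsub hc).
have hsub' : forall g, g \in F :\ f -> g \subset W.
  by move=> g; rewrite in_setD1 => /andP[_ /hsub].
have /eqP/cards2P [s [t [hst hft]]] := hsz f hf.
have hst' := hnb f s t hf hft.
rewrite (ncomp1 hW hsub') //.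
move=> x y hx hy; apply: (cn_reroute hft hst'); exact: hc.
Qed.

Lemma tec_TE W F : two_edge_connected W F -> W != set0 ->
  (forall f, f \in F -> f \subset W) -> TE W F.
Proof.
case=> [->|[[_ hc] hnb]]; first by rewrite eqxx.
move=> hW hsub.
have hc' : forall x y, x \in W -> y \in W -> cn F x y.
  by move=> x y hx hy; rewrite /cn -(eq_connect (adjgE hsub)); apply: hc.
split=> // f s t hf hft.
case: (boolP (cn (F :\ f) s t)) => // hn; exfalso; apply: (hnb f); split=> //.
rewrite (ncomp1 hW hsub hc') /ncomp.
have hsW : s \in W by apply: (subsetP (hsub _ hf)); rewrite hft set21.
have htW : t \in W by apply: (subsetP (hsub _ hf)); rewrite hft set22.
have hsub' : forall g, g \in F :\ f -> g \subset W.
  by move=> g; rewrite in_setD1 => /andP[_ /hsub].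
set Cs := [set y in W | connect (adjg W (F :\ f)) s y].
set Ct := [set y in W | connect (adjg W (F :\ f)) t y].
have hne : Cs != Ct.
  apply/negP=> /eqP hE.
  have : t \in Ct by rewrite inE htW connect0.
  by rewrite -hE inE htW (eq_connect (adjgE hsub')); move: hn; rewrite /cn => /negbTE ->.
apply: (@leq_trans #|[set Cs; Ct]|); first by rewrite cards2 hne.
apply: subset_leq_card; apply/subsetP=> C; rewrite in_set2 => /orP[]/eqP->.
  by apply/imsetP; exists s.
by apply/imsetP; exists t.
Qed.

Lemma TE_union W1 W2 F1 F2 x : TE W1 F1 -> TE W2 F2 -> x \in W1 -> x \in W2 ->
  TE (W1 :|: W2) (F1 :|: F2).
Proof.
case=> h1 s1 c1 n1 [h2 s2 c2 n2] hx1 hx2; split.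
- by apply/set0Pn; exists x; rewrite inE hx1.
- move=> f; rewrite inE => /orP[] hf.
    by apply: subset_trans (s1 _ hf) _; apply: subsetUl.
  by apply: subset_trans (s2 _ hf) _; apply: subsetUr.
- have hx : forall y, y \in W1 :|: W2 -> cn (F1 :|: F2) y x.
    move=> y; rewrite inE => /orP[] hy.
      by apply: (cn_sub (subsetUl _ _)); apply: c1.
    by apply: (cn_sub (subsetUr _ _)); apply: c2.
  move=> a b ha hb; apply: (cn_trans (hx a ha)); rewrite cn_sym; exact: hx.
- move=> f s t; rewrite inE => /orP[] hf hft.
    by apply: (cn_sub _ (n1 _ _ _ hf hft)); apply: setSD; apply: subsetUl.
  by apply: (cn_sub _ (n2 _ _ _ hf hft)); apply: setSD; apply: subsetUr.
Qed.


Definition J A x y := [/\ cn A x y, (forall f w, f \in A -> w \in f -> cn A w x) &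
  (forall f s t, f \in A -> f = [set s; t] ->
    [\/ cn (A :\ f) s t, cn (A :\ f) s x && cn (A :\ f) t y |
        cn (A :\ f) s y && cn (A :\ f) t x])].

Lemma J_sym A x y : J A x y -> J A y x.
Proof.
case=> hxy hv he; split; first by rewrite cn_sym.
  by move=> f w hf hw; apply: cn_trans (hv f w hf hw) hxy.
move=> f s t hf hft; case: (he f s t hf hft) => [?|?|?]; by [constructor 1|constructor 3|constructor 2].
Qed.

Lemma J0 x : J set0 x x.
Proof. by split; [apply: cn_refl| move=> f w; rewrite inE| move=> f s t; rewrite inE]. Qed.

Lemma J1 s t : J [set [set s; t]] s t.
Proof.
split; first by apply: cn1; rewrite set11.
  move=> f w; rewrite inE => /eqP -> /set2P [] ->; first exact: cn_refl.
  by apply: cn1; rewrite inE set2C.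
move=> f a b; rewrite inE => /eqP -> /esym/set2_eq [[-> ->]|[-> ->]].
  by constructor 2; rewrite !cn_refl.
by constructor 3; rewrite !cn_refl.
Qed.

Lemma J_cat A B x y z : J A x z -> J B z y -> A :&: B = set0 -> J (A :|: B) x y.
Proof.
case=> ha hva hea [hb hvb heb] hd.
have sA := subsetUl A B; have sB := subsetUr A B.
have nB : forall f, f \in A -> f \notin B.
  by move=> f hf; apply/negP=> hfB; move/setP: hd => /(_ f); rewrite !inE hf hfB.
have nA : forall f, f \in B -> f \notin A.
  by move=> f hf; apply/negP=> hfA; move/setP: hd => /(_ f); rewrite !inE hf hfA.
have hxz : cn (A :|: B) x z by apply: cn_sub sA ha.
have hzy : cn (A :|: B) z y by apply: cn_sub sB hb.
split; first exact: cn_trans hxz hzy.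
  move=> f w; rewrite inE => /orP[] hf hw.
    by apply: cn_sub sA (hva f w hf hw).
  apply: cn_trans (cn_sub sB (hvb f w hf hw)) _; rewrite cn_sym //.
move=> f s t; rewrite inE => /orP[] hf hft.
  have sA' : A :\ f \subset (A :|: B) :\ f by apply: setSD.
  have hzy' : cn ((A :|: B) :\ f) z y.
    apply: cn_sub hb; apply/subsetP=> g hg; rewrite !inE hg orbT andbT.
    by apply/eqP=> e; move: (nB f hf); rewrite -e hg.
  case: (hea f s t hf hft) => [h|/andP[h1 h2]|/andP[h1 h2]].
  - by constructor 1; apply: cn_sub sA' h.
  - by constructor 2; rewrite (cn_sub sA' h1) (cn_trans (cn_sub sA' h2) hzy').
  - by constructor 3; rewrite (cn_sub sA' h2) (cn_trans (cn_sub sA' h1) hzy').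
have sB' : B :\ f \subset (A :|: B) :\ f by apply: setSD.
have hxz' : cn ((A :|: B) :\ f) x z.
  apply: cn_sub ha; apply/subsetP=> g hg; rewrite !inE hg andbT.
  by apply/eqP=> e; move: (nA f hf); rewrite -e hg.
case: (heb f s t hf hft) => [h|/andP[h1 h2]|/andP[h1 h2]].
- by constructor 1; apply: cn_sub sB' h.
- constructor 2; rewrite (cn_sub sB' h2) andbT.
  by apply: cn_trans (cn_sub sB' h1) _; rewrite cn_sym.
- constructor 3; rewrite (cn_sub sB' h1) /=.
  by apply: cn_trans (cn_sub sB' h2) _; rewrite cn_sym.
Qed.

Lemma J_add A B x y s t : J A x y -> J B s t ->
  s \in verts A :|: [set x; y] -> t \in verts A :|: [set x; y] ->
  A :&: B = set0 -> J (A :|: B) x y.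
Proof.
case=> ha hva hea [hb hvb heb] hs ht hd.
have sA := subsetUl A B; have sB := subsetUr A B.
have nA : forall f, f \in B -> f \notin A.
  by move=> f hf; apply/negP=> hfA; move/setP: hd => /(_ f); rewrite !inE hf hfA.
have nB : forall f, f \in A -> f \notin B.
  by move=> f hf; apply/negP=> hfB; move/setP: hd => /(_ f); rewrite !inE hf hfB.
have hvx : forall w, w \in verts A :|: [set x; y] -> cn A w x.
  move=> w; rewrite inE => /orP[/vertsE[f hf hw]|/set2P[]->].
  - exact: hva hf hw.
  - exact: cn_refl.
  - by rewrite cn_sym.
split; first by apply: cn_sub sA ha.
  move=> f w; rewrite inE => /orP[] hf hw.
    by apply: cn_sub sA (hva f w hf hw).
  exact: cn_trans (cn_sub sB (hvb f w hf hw)) (cn_sub sA (hvx s hs)).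
move=> f a b; rewrite inE => /orP[] hf hft.
  have sA' : A :\ f \subset (A :|: B) :\ f by apply: setSD.
  case: (hea f a b hf hft) => [h|/andP[h1 h2]|/andP[h1 h2]].
  - by constructor 1; apply: cn_sub sA' h.
  - by constructor 2; rewrite (cn_sub sA' h1) (cn_sub sA' h2).
  - by constructor 3; rewrite (cn_sub sA' h1) (cn_sub sA' h2).
have sB' : B :\ f \subset (A :|: B) :\ f by apply: setSD.
have sA' : A \subset (A :|: B) :\ f.
  apply/subsetP=> g hg; rewrite !inE hg andbT.
  by apply/eqP=> e; move: (nA f hf); rewrite -e hg.
have hst : cn ((A :|: B) :\ f) s t.
  apply: cn_sub sA' _; apply: cn_trans (hvx s hs) _; rewrite cn_sym; exact: hvx.
constructor 1; case: (heb f a b hf hft) => [h|/andP[h1 h2]|/andP[h1 h2]].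
- exact: cn_sub sB' h.
- apply: cn_trans (cn_sub sB' h1) _; apply: cn_trans hst _; rewrite cn_sym.
  exact: cn_sub sB' h2.
- have hts : cn ((A :|: B) :\ f) t s by rewrite cn_sym.
  apply: cn_trans (cn_sub sB' h1) _; apply: cn_trans hts _.
  by rewrite cn_sym; exact: cn_sub sB' h2.
Qed.


Lemma J_TE A B x y : J A x y -> J B x y -> A :&: B = set0 ->
  TE (verts (A :|: B) :|: [set x; y]) (A :|: B).
Proof.
case=> ha hva hea [hb hvb heb] hd.
have sA := subsetUl A B; have sB := subsetUr A B.
have nA : forall f, f \in B -> f \notin A.
  by move=> f hf; apply/negP=> hfA; move/setP: hd => /(_ f); rewrite !inE hf hfA.
have nB : forall f, f \in A -> f \notin B.
  by move=> f hf; apply/negP=> hfB; move/setP: hd => /(_ f); rewrite !inE hf hfB.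
split.
- by apply/set0Pn; exists x; rewrite !inE eqxx orbT.
- move=> f hf; apply/subsetP=> w hw; rewrite inE (vertsP hf hw) //.
- have hx : forall w, w \in verts (A :|: B) :|: [set x; y] -> cn (A :|: B) w x.
    move=> w; rewrite inE => /orP[/vertsE[f]|/set2P[]->].
    + rewrite inE => /orP[] hf hw; first by apply: cn_sub sA (hva f w hf hw).
      by apply: cn_sub sB (hvb f w hf hw).
    + exact: cn_refl.
    + by rewrite cn_sym; apply: cn_sub sA ha.
  move=> a b hxa hxb; apply: cn_trans (hx a hxa) _; rewrite cn_sym; exact: hx.
- move=> f s t; rewrite inE => /orP[] hf hft.
    have sA' : A :\ f \subset (A :|: B) :\ f by apply: setSD.
    have sB' : B \subset (A :|: B) :\ f.
      apply/subsetP=> g hg; rewrite !inE hg orbT andbT.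
      by apply/eqP=> e; move: (nB f hf); rewrite -e hg.
    have hxy := cn_sub sB' hb.
    case: (hea f s t hf hft) => [h|/andP[h1 h2]|/andP[h1 h2]].
    + exact: cn_sub sA' h.
    + apply: cn_trans (cn_sub sA' h1) _; apply: cn_trans hxy _.
      by rewrite cn_sym; exact: cn_sub sA' h2.
    + apply: cn_trans (cn_sub sA' h1) _; rewrite cn_sym in hxy.
      apply: cn_trans hxy _; by rewrite cn_sym; exact: cn_sub sA' h2.
  have sB' : B :\ f \subset (A :|: B) :\ f by apply: setSD.
  have sA' : A \subset (A :|: B) :\ f.
    apply/subsetP=> g hg; rewrite !inE hg andbT.
    by apply/eqP=> e; move: (nA f hf); rewrite -e hg.
  have hxy := cn_sub sA' ha.
  case: (heb f s t hf hft) => [h|/andP[h1 h2]|/andP[h1 h2]].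
  + exact: cn_sub sB' h.
  + apply: cn_trans (cn_sub sB' h1) _; apply: cn_trans hxy _.
    by rewrite cn_sym; exact: cn_sub sB' h2.
  + apply: cn_trans (cn_sub sB' h1) _; rewrite cn_sym in hxy.
    apply: cn_trans hxy _; by rewrite cn_sym; exact: cn_sub sB' h2.
Qed.

Lemma TE_J W H x y : TE W H -> x \in W -> y \in W -> J H x y.
Proof.
case=> _ hsub hc hnb hx hy; split; first exact: hc.
  by move=> f w hf hw; apply: hc => //; apply: (subsetP (hsub _ hf)).
by move=> f s t hf hft; constructor 1; apply: hnb.
Qed.

Fixpoint eset x (p : seq T) : {set {set T}} :=
  if p is y :: q then [set x; y] |: eset y q else set0.

Lemma eset_cons x y p : eset x (y :: p) = [set x; y] |: eset y p.
Proof. by []. Qed.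

Lemma eset_sub F x p : path (ad F) x p -> eset x p \subset F.
Proof.
elim: p x => [|y p IH] x /=; first by rewrite sub0set.
case/andP=> hxy hp; rewrite subUset sub1set; apply/andP; split; [exact: hxy | exact: IH].
Qed.

Lemma eset_vert x p f w : f \in eset x p -> w \in f -> w \in x :: p.
Proof.
elim: p x => [|y p IH] x /=; first by rewrite inE.
rewrite in_setU1 => /orP[/eqP->|hf] hw.
  by move: hw; rewrite in_set2 !inE => /orP[]->; rewrite ?orbT.
by rewrite inE (IH y hf hw) orbT.
Qed.

Lemma eset_first x p f : f \in eset x p -> exists a b, [/\ f = [set a; b], a \in belast x p & b \in p].
Proof.
elim: p x => [|y p IH] x /=; first by rewrite inE.
rewrite in_setU1 => /orP[/eqP->|hf]; first by exists x, y; rewrite !inE !eqxx.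
case: (IH y hf) => a [b [-> ha hb]]; exists a, b; split => //.
  by rewrite inE ha orbT.
by rewrite inE hb orbT.
Qed.

Lemma eset_cat x p q : eset x (p ++ q) = eset x p :|: eset (last x p) q.
Proof.
elim: p x => [|y p IH] x /=; first by rewrite set0U.
by rewrite IH setUA.
Qed.

Lemma path_J F x p : path (ad F) x p -> uniq (x :: p) -> J (eset x p) x (last x p).
Proof.
elim: p x => [|y p IH] x /=; first by move=> _ _; exact: J0.
case/andP=> hxy hp /andP[hx hu].
apply: (J_cat (J1 x y) (IH y hp hu)).
apply/setP=> f; rewrite !inE; apply/negP=> /andP[/eqP-> hf].
by move: hx; rewrite (eset_vert hf (set21 x y)).
Qed.


Definition PP F X z p := [/\ path (ad F) z p, uniq (z :: p), last z p \in X &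
  forall a, a \in belast z p -> a \notin X].

Definition Two F X z := exists p1 p2, [/\ PP F X z p1, PP F X z p2 &
  eset z p1 :&: eset z p2 = set0].

Lemma PP_nil F X z : z \in X -> PP F X z [::].
Proof. by move=> hz; split. Qed.

Lemma cut_path F Z v p : path (ad F) v p -> uniq (v :: p) -> last v p \in Z ->
  exists q, PP F Z v q /\ {subset q <= p}.
Proof.
elim: p v => [|y p IH] v.
  by move=> _ _ hv; exists [::]; split => //; apply: PP_nil.
case: (boolP (v \in Z)) => hvZ.
  by move=> _ _ _; exists [::]; split => //; apply: PP_nil.
rewrite /= => /andP[hvy hp] /andP[hv hu] hl.
case: (IH y hp hu hl) => q [[hq1 hq2 hq3 hq4] hsub].
exists (y :: q); split; last first.
  by move=> a; rewrite !inE => /orP[->//|/hsub ->]; rewrite orbT.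
split => //=.
- by rewrite hvy.
- apply/andP; split=> //; apply/negP=> hvq.
  move: hv; rewrite inE negb_or => /andP[h1 h2]; move: hvq; rewrite inE.
  case/orP=> [/eqP e|hq]; first by rewrite e eqxx in h1.
  by rewrite (hsub _ hq) in h2.
- by move=> a; rewrite inE => /orP[/eqP->//|]; apply: hq4.
Qed.

Lemma first_hit F Z v z : z \in Z -> cn F v z -> exists q, PP F Z v q.
Proof.
move=> hz /connectP [p hp hl]; rewrite hl in hz.
case: (shortenP hp) hz => p' hp' hu _ hz.
by case: (cut_path hp' hu hz) => q [hq _]; exists q.
Qed.

Lemma tailP F X z p w : PP F X z p -> w \in p ->
  exists r, [/\ PP F X w r, eset w r \subset eset z p & {subset w :: r <= p}].
Proof.
move=> hPP hw; case/splitPr: hw hPP => l r [hp hu hl hb].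
exists r; split.
- move: hp hu hl hb; rewrite cat_path last_cat belast_cat /= => /andP[_ /andP[_ hp]].
  move=> hu hl hb; split => //.
  + by move: hu => /andP[_]; rewrite cat_uniq => /and3P[_ _ ->].
  + by move=> a ha; apply: hb; rewrite mem_cat inE ha !orbT.
- by rewrite eset_cat /= setUA subsetUr.
- by move=> a; rewrite mem_cat => ->; rewrite orbT.
Qed.

Lemma cons_PP F X s' s p : PP F X s' p -> [set s'; s] \in F -> s \notin X ->
  s \notin s' :: p -> PP F X s (s' :: p).
Proof.
case=> hp hu hl hb hF hsX hs; split => //=.
- by rewrite hp andbT /ad set2C.
- by rewrite hs.
- by move=> a; rewrite inE => /orP[/eqP->//|]; apply: hb.
Qed.

Lemma eset_avoid F Z s q (K : {set {set T}}) : PP F Z s q -> (forall f w, f \in K -> w \in f -> w \in Z) ->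
  eset s q :&: K = set0.
Proof.
case=> _ _ _ hb hK; apply/setP=> f; rewrite !inE; apply/negP=> /andP[hf hfK].
case: (eset_first hf) => a [b [hfe ha _]].
by move: (hb a ha); rewrite (hK f a hfK) // hfe set21.
Qed.

Lemma route F X Z s s' q r : PP (F :\ [set s'; s]) Z s q -> PP F X (last s q) r ->
  {subset (last s q) :: r <= Z} -> X \subset Z -> PP F X s (q ++ r).
Proof.
case=> hq hu hl hb [hr hur hlr hbr] hsub hXZ; split.
- rewrite cat_path hr andbT; apply: sub_path hq => a b; rewrite /ad in_setD1.
  by case/andP.
- rewrite -cat_cons cat_uniq hu; move: (hur); rewrite /= => /andP[hw ->]; rewrite andbT.
  apply/hasPn=> a har; apply/negP; rewrite lastI mem_rcons inE => /orP[/eqP e|ha].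
    by move: hw; rewrite -e har.
  by move: (hb a ha); rewrite (hsub a) // inE har orbT.
- by rewrite last_cat.
- move=> a; rewrite belast_cat mem_cat => /orP[ha|ha]; last exact: hbr.
  by apply/negP=> haX; move: (hb a ha); rewrite (subsetP hXZ a haX).
Qed.

Lemma two_of F X s s' rA p2 : PP F X s rA -> PP F X s' p2 -> [set s'; s] \in F ->
  s \notin X -> s \notin s' :: p2 ->
  eset s rA :&: ([set s; s'] |: eset s' p2) = set0 -> Two F X s.
Proof.
move=> hA hp2 hF hsX hs hd; exists rA, (s' :: p2); split => //.
exact: cons_PP.
Qed.


Lemma disj_in (A B : {set {set T}}) f : A :&: B = set0 -> f \in A -> f \in B -> False.
Proof. by move/setP=> /(_ f); rewrite !inE => h hA hB; move: h; rewrite hA hB. Qed.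

Lemma disjP (A B : {set {set T}}) : (forall f, f \in A -> f \in B -> False) -> A :&: B = set0.
Proof.
move=> h; apply/setP=> f; rewrite !inE; apply/negP=> /andP[hA hB]; exact: h hA hB.
Qed.

Lemma uniq_notin z p : uniq (z :: p) -> z \notin p.
Proof. by case/andP. Qed.

Lemma step_tail F X s' s p1 p2 :
  PP F X s' p1 -> PP F X s' p2 -> eset s' p1 :&: eset s' p2 = set0 ->
  [set s'; s] \in F -> s \notin X -> s \in p1 -> s \notin s' :: p2 -> Two F X s.
Proof.
move=> hp1 hp2 hd hF hsX hs1 hs2.
case: (tailP hp1 hs1) => r [hr hsub hsr].
apply: (two_of hr hp2 hF hsX hs2); apply: disjP => f hf.
rewrite in_setU1 => /orP[/eqP e|hf2].
  have hs' : s' \in s :: r by apply: (eset_vert hf); rewrite e set22.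
  by move: (hsr _ hs') => h; case: hp1 => _ /uniq_notin; rewrite h.
exact: disj_in hd (subsetP hsub f hf) hf2.
Qed.

Lemma step_both F X s' s p1 p2 :
  PP F X s' p1 -> PP F X s' p2 -> eset s' p1 :&: eset s' p2 = set0 ->
  s \in p1 -> s \in p2 -> Two F X s.
Proof.
move=> hp1 hp2 hd hs1 hs2.
case: (tailP hp1 hs1) => r1 [hr1 hsub1 _].
case: (tailP hp2 hs2) => r2 [hr2 hsub2 _].
exists r1, r2; split => //; apply: disjP => f h1 h2.
exact: disj_in hd (subsetP hsub1 f h1) (subsetP hsub2 f h2).
Qed.

Lemma tail_or F X z p w : PP F X z p -> w \in z :: p ->
  exists r, [/\ PP F X w r, eset w r \subset eset z p & {subset w :: r <= z :: p}].
Proof.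
move=> hp; rewrite inE => /orP[/eqP->|hw]; first by exists p; split => //; rewrite subxx.
case: (tailP hp hw) => r [h1 h2 h3]; exists r; split => // a /h3 ha.
by rewrite inE ha orbT.
Qed.

Lemma step_q F X Z s' s p1 p2 q :
  PP F X s' p1 -> PP F X s' p2 -> eset s' p1 :&: eset s' p2 = set0 ->
  [set s'; s] \in F -> s \notin X -> s \notin Z -> X \subset Z ->
  {subset s' :: p1 <= Z} -> {subset s' :: p2 <= Z} ->
  PP (F :\ [set s'; s]) Z s q -> last s q \in s' :: p1 -> s \notin s' :: p2 ->
  Two F X s.
Proof.
move=> hp1 hp2 hd hF hsX hsZ hXZ hZ1 hZ2 hq hw hs2.
case: (tail_or hp1 hw) => r [hr hsub hsr].
have hrZ : {subset last s q :: r <= Z} by move=> a /hsr /hZ1.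
have hA := route hq hr hrZ hXZ.
apply: (two_of hA hp2 hF hsX hs2); apply: disjP => f.
rewrite eset_cat in_setU => /orP[hf|hf].
  rewrite in_setU1 => /orP[/eqP e|hf2].
    case: hq => hqp _ _ _; move: (subsetP (eset_sub hqp) f hf).
    by rewrite e in_setD1 set2C eqxx.
  apply: disj_in (eset_avoid hq _) hf hf2 => g a hg ha.
  exact: hZ2 (eset_vert hg ha).
rewrite in_setU1 => /orP[/eqP e|hf2].
  by move: hsZ; rewrite (hrZ s) // (eset_vert hf) // e set21.
exact: disj_in hd (subsetP hsub f hf) hf2.
Qed.

Lemma step_qX F X Z s' s p1 q :
  PP F X s' p1 -> [set s'; s] \in F -> s \notin X -> s \notin Z -> X \subset Z ->
  {subset s' :: p1 <= Z} ->
  PP (F :\ [set s'; s]) Z s q -> last s q \in X -> Two F X s.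
Proof.
move=> hp1 hF hsX hsZ hXZ hZ1 hq hw.
have hrZ : {subset last s q :: [::] <= Z}.
  by move=> a; rewrite inE => /eqP->; apply: (subsetP hXZ).
have := route hq (PP_nil F hw) hrZ hXZ; rewrite cats0 => hA.
have hs1 : s \notin s' :: p1 by apply/negP=> /hZ1; apply/negP.
apply: (two_of hA hp1 hF hsX hs1); apply: disjP => f hf.
rewrite in_setU1 => /orP[/eqP e|hf2].
  case: hq => hqp _ _ _; move: (subsetP (eset_sub hqp) f hf).
  by rewrite e in_setD1 set2C eqxx.
apply: disj_in (eset_avoid hq _) hf hf2 => g a hg ha.
exact: hZ1 (eset_vert hg ha).
Qed.


Lemma step F X s' s p1 p2 :
  PP F X s' p1 -> PP F X s' p2 -> eset s' p1 :&: eset s' p2 = set0 ->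
  [set s'; s] \in F -> s \notin X -> s != s' -> cn (F :\ [set s'; s]) s s' ->
  Two F X s.
Proof.
move=> hp1 hp2 hd hF hsX hss hcn.
have hd' : eset s' p2 :&: eset s' p1 = set0 by rewrite setIC.
case: (boolP (s \in p1)) => hs1; case: (boolP (s \in p2)) => hs2.
- exact: step_both hp1 hp2 hd hs1 hs2.
- by apply: (step_tail hp1 hp2 hd hF hsX hs1); rewrite inE negb_or hss.
- by apply: (step_tail hp2 hp1 hd' hF hsX hs2); rewrite inE negb_or hss.
set Z := X :|: [set a | a \in s' :: p1] :|: [set a | a \in s' :: p2].
have hXZ : X \subset Z by apply/subsetP=> a ha; rewrite !inE ha.
have hZ1 : {subset s' :: p1 <= Z}.
  by move=> a ha; apply/setUP; left; apply/setUP; right; rewrite inE.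
have hZ2 : {subset s' :: p2 <= Z} by move=> a ha; apply/setUP; right; rewrite inE.
have hs1' : s \notin s' :: p1 by rewrite inE negb_or hss.
have hs2' : s \notin s' :: p2 by rewrite inE negb_or hss.
have hsZ : s \notin Z.
  apply/negP=> /setUP[/setUP[h|h]|h]; first by rewrite h in hsX.
    by move: h; rewrite inE (negbTE hs1').
  by move: h; rewrite inE (negbTE hs2').
have hs'Z : s' \in Z by apply: hZ1; rewrite inE eqxx.
case: (first_hit hs'Z hcn) => q hq.
have hw : last s q \in Z by case: hq.
case: (boolP (last s q \in s' :: p1)) => hw1.
  exact: (step_q hp1 hp2 hd hF hsX hsZ hXZ hZ1 hZ2 hq hw1 hs2').
case: (boolP (last s q \in s' :: p2)) => hw2.
  exact: (step_q hp2 hp1 hd' hF hsX hsZ hXZ hZ2 hZ1 hq hw2 hs1').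
have hwX : last s q \in X.
  case/setUP: hw => [/setUP[//|]|]; rewrite inE => h.
    by move: h; rewrite (negbTE hw1).
  by move: h; rewrite (negbTE hw2).
exact: (step_qX hp1 hF hsX hsZ hXZ hZ1 hq hwX).
Qed.

Lemma two_all F X z :
  (forall f s t, f \in F -> f = [set s; t] -> cn (F :\ f) s t) ->
  (forall f, f \in F -> #|f| = 2%N) ->
  forall x, x \in X -> cn F z x -> Two F X z.
Proof.
move=> hnb hsz x hx /connectP [p hp hl]; subst x.
elim: p z hp hx => [|y p IH] z.
  move=> _ hz; exists [::], [::]; split; try exact: PP_nil.
  by rewrite /= setI0.
rewrite /= => /andP[hzy hp] hl.
case: (boolP (z \in X)) => hzX.
  exists [::], [::]; split; try exact: PP_nil.
  by rewrite /= setI0.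
case: (IH y hp hl) => p1 [p2 [hp1 hp2 hd]].
have hF : [set y; z] \in F by rewrite set2C.
have hzy' : z != y.
  by move: (hsz _ hzy); rewrite cards2; case: (z != y).
apply: (step hp1 hp2 hd hF hzX hzy'); rewrite cn_sym; exact: hnb.
Qed.


Lemma menger2 W H x y : TE W H -> (forall f, f \in H -> #|f| = 2%N) ->
  x \in W -> y \in W ->
  exists B1 B2, [/\ B1 \subset H, B2 \subset H, B1 :&: B2 = set0, J B1 x y & J B2 x y].
Proof.
case=> hW hsub hc hnb hsz hx hy.
case: (two_all (X := [set y]) hnb hsz (set11 y) (hc x y hx hy)) => p1 [p2 [h1 h2 hd]].
exists (eset x p1), (eset x p2).
case: h1 => hp1 hu1 hl1 _; case: h2 => hp2 hu2 hl2 _.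
move: hl1 hl2; rewrite !inE => /eqP hl1 /eqP hl2.
split => //; try exact: eset_sub.
  by rewrite -hl1; exact: path_J hp1 hu1.
by rewrite -hl2; exact: path_J hp2 hu2.
Qed.

Lemma verts_sub (A B : {set {set T}}) : A \subset B -> verts A \subset verts B.
Proof.
move=> hAB; apply/subsetP=> w /vertsE [f hf hw]; exact: vertsP (subsetP hAB f hf) hw.
Qed.

Lemma start_in x p : x \in verts (eset x p) :|: [set last x p].
Proof.
case: p => [|y p] /=; first by rewrite !inE eqxx orbT.
by rewrite inE (vertsP (f := [set x; y])) // !inE eqxx.
Qed.

Lemma ear (E : {set {set T}}) W H (e : {set T}) :
  (forall f s t, f \in E -> f = [set s; t] -> cn (E :\ f) s t) ->
  (forall f, f \in E -> #|f| = 2%N) -> (forall x y, cn E x y) ->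
  TE W H -> H \subset E -> e \in E -> e \notin H ->
  exists A x y, [/\ A \subset E, A :&: H = set0, e \in A, x \in W & y \in W] /\ J A x y.
Proof.
move=> hnb hsz hcE [hW hsubW _ _] hHE heE heH.
case/set0Pn: hW => x0 hx0.
have /eqP/cards2P [u [v [huv he]]] := hsz e heE.
case: (two_all (X := W) hnb hsz hx0 (hcE u x0)) => p1 [p2 [h1 h2 hd]].
have hvW : forall f w, f \in H -> w \in f -> w \in W.
  by move=> f w hf hw; apply: (subsetP (hsubW f hf)).
have avH : forall p, PP E W u p -> eset u p :&: H = set0.
  by move=> p hp; apply: eset_avoid hp hvW.
have sE : forall p, PP E W u p -> eset u p \subset E.
  by move=> p [hp _ _ _]; exact: eset_sub hp.
have J1' : J (eset u p1) (last u p1) u.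
  by case: h1 => hp hu _ _; apply: J_sym; exact: path_J hp hu.
have J2' : J (eset u p2) u (last u p2).
  by case: h2 => hp hu _ _; exact: path_J hp hu.
have hx1 : last u p1 \in W by case: h1.
have hx2 : last u p2 \in W by case: h2.
set x1 := last u p1 in J1' hx1 *; set x2 := last u p2 in J2' hx2 *.
set A0 := eset u p1 :|: eset u p2.
have JA0 : J A0 x1 x2 by apply: J_cat J1' J2' hd.
have A0E : A0 \subset E by rewrite subUset !sE.
have A0H : A0 :&: H = set0 by rewrite setIUl !avH // setU0.
set V0 := verts A0 :|: [set x1; x2].
have huV0 : u \in V0.
  case/setUP: (start_in u p1) => h.
    by rewrite inE (subsetP (verts_sub (subsetUl _ (eset u p2))) u h).
  by move: h; rewrite inE => /eqP h; rewrite !inE /x1 -h eqxx orbT.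
case: (boolP (e \in A0)) => heA0.
  by exists A0, x1, x2; split; first split.
have hdisjE : forall (K : {set {set T}}), e \notin K -> K :&: [set e] = set0.
  move=> K hK; apply: disjP => f hf; rewrite inE => /eqP hfe.
  by move: hK; rewrite -hfe hf.
case: (boolP (v \in V0)) => hvV0.
  exists (A0 :|: [set e]), x1, x2; split; first split => //.
  - by rewrite subUset A0E sub1set heE.
  - rewrite setIUl A0H set0U; apply: disjP => f; rewrite inE => /eqP-> h.
    by rewrite h in heH.
  - by rewrite !inE eqxx orbT.
  - by apply: J_add JA0 _ huV0 hvV0 _; [rewrite he; exact: J1 | exact: hdisjE].
set Z := V0 :|: W.
have huZ : u \in Z by rewrite inE huV0.
have hcn : cn (E :\ e) v u by rewrite cn_sym; apply: hnb heE he.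
case: (first_hit huZ hcn) => q hq.
have hqE : eset v q \subset E :\ e by case: hq => hp _ _ _; exact: eset_sub hp.
have heq : e \notin eset v q.
  by apply/negP=> /(subsetP hqE); rewrite in_setD1 eqxx.
have JQ : J (eset v q) v (last v q) by case: hq => hp hu _ _; exact: path_J hp hu.
set w := last v q in JQ.
have hwZ : w \in Z by case: hq.
set B := [set e] :|: eset v q.
have JB : J B u w.
  apply: J_cat _ JQ _; first by rewrite he; exact: J1.
  by rewrite setIC; apply: hdisjE.
have BE : B \subset E.
  by rewrite subUset sub1set heE (subset_trans hqE) // subD1set.
have qH : eset v q :&: H = set0.
  by apply: eset_avoid hq _ => f a hf ha; rewrite inE (hvW f a hf ha) orbT.
have BH : B :&: H = set0.
  rewrite setIUl qH setU0; apply: disjP => f; rewrite inE => /eqP-> h.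
  by rewrite h in heH.
have qA0 : forall K : {set {set T}}, K \subset A0 -> eset v q :&: K = set0.
  move=> K hK; apply: eset_avoid hq _ => f a hf ha.
  by rewrite !inE (vertsP (subsetP hK f hf) ha).
have KB : forall K : {set {set T}}, K \subset A0 -> K :&: B = set0.
  move=> K hK; rewrite setIUr (hdisjE K) ?set0U; first by rewrite setIC qA0.
  by apply/negP=> /(subsetP hK); apply/negP.
case: (boolP (w \in V0)) => hwV0.
  exists (A0 :|: B), x1, x2; split; first split => //.
  - by rewrite subUset A0E BE.
  - by rewrite setIUl A0H BH setU0.
  - by rewrite !inE eqxx orbT.
  - by apply: J_add JA0 JB huV0 hwV0 _; apply: KB.
have hwW : w \in W.
  by move: hwZ; rewrite inE (negbTE hwV0).
have s1 : eset u p1 \subset A0 by apply: subsetUl.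
exists (eset u p1 :|: B), x1, w; split; first split => //.
- by rewrite subUset (sE p1 h1) BE.
- by rewrite setIUl (avH p1 h1) BH setU0.
- by rewrite !inE eqxx orbT.
- by apply: J_cat J1' JB _; apply: KB.
Qed.

End Graph.

Local Open Scope ring_scope.
Section Lin.
Variables (K : fieldType) (V : vectType K).

Lemma extract (S : seq V) : exists Y, [/\ free Y, {subset Y <= S} & (<<S>> <= <<Y>>)%VS].
Proof.
elim: S => [|v S [Y [hf hs hsp]]].
  by exists [::]; split; rewrite ?nil_free ?span_nil ?sub0v.
case: (boolP (v \in <<Y>>%VS)) => hv.
  exists Y; split => //; first by move=> a /hs ha; rewrite inE ha orbT.
  by rewrite span_cons subv_add hsp andbT -memvE.
exists (v :: Y); split.
- by rewrite free_cons hv.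
- by move=> a; rewrite !inE => /orP[->//|/hs ->]; rewrite orbT.
- by rewrite !span_cons addvS.
Qed.

Lemma free_size_dim (Y : seq V) (U : {vspace V}) : free Y -> {subset Y <= U} ->
  (size Y <= \dim U)%N.
Proof.
move=> /eqnP hf hs; rewrite -hf; apply: dimvS; exact/span_subvP.
Qed.

Lemma lin_free n (q : 'I_n -> V) :
  (forall c, \sum_i c i *: q i = 0 -> forall i, c i = 0) -> free [tuple q i | i < n].
Proof.
move=> h; apply/freeP => c hc; apply: h.
rewrite -[RHS]hc; apply: eq_bigr => i _; congr (_ *: _).
by rewrite -tnth_nth tnth_mktuple.
Qed.

Lemma free_lin (Y : seq V) : free Y ->
  forall c : 'I_(size Y) -> K, \sum_i c i *: Y`_i = 0 -> forall i, c i = 0.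
Proof. by move=> hf; have /freeP := hf : free (in_tuple Y). Qed.

End Lin.

Definition pb (P : Prop) : bool := if excluded_middle_informative P then true else false.
Lemma pbP (P : Prop) : reflect P (pb P).
Proof. by rewrite /pb; case: excluded_middle_informative => h; constructor. Qed.

Section Main.
Variables (R : realFieldType) (T : finType) (E : {set {set T}}).
Hypothesis hsimple : simple_edges E.
Hypothesis h2ec : two_edge_connected [set: T] E.
Variable e : edges E.

Let V := {ffun edges E -> R^o}.
Definition ch (F : {set {set T}}) : V := chi R E F.
Definition De F := tec_edge_set E F /\ val e \in F.
Definition S : seq V := [seq ch F | F <- enum [pred F | pb (De F)]].
Definition U := (<<S>>)%VS.

Lemma De_span F : De F -> ch F \in U.
Proof.
move=> h; apply: memv_span; apply: map_f; rewrite mem_enum inE; exact/pbP.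
Qed.

Lemma hszE f : f \in E -> #|f| = 2%N.
Proof. exact: hsimple. Qed.

Lemma TEG : TE [set: T] E.
Proof.
apply: tec_TE h2ec _ _; last by move=> f _; apply: subsetT.
have /eqP/cards2P [u [v [_ _]]] := hszE (valP e).
by apply/set0Pn; exists u; rewrite inE.
Qed.

Lemma hcE x y : cn E x y.
Proof. by case: TEG => _ _ hc _; apply: hc; rewrite inE. Qed.

Lemma hnbE f s t : f \in E -> f = [set s; t] -> cn (E :\ f) s t.
Proof. by case: TEG => _ _ _ hnb; apply: hnb. Qed.

Lemma TE_tecE W K : TE W K -> K \subset E -> tec_edge_set E K.
Proof.
move=> hT hK; exists W; split; first by split => //; case: hT.
by apply: TE_tec hT _ => f hf; apply: hszE; exact: (subsetP hK).
Qed.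

Lemma chi_id (F A B1 B2 : {set {set T}}) : A :&: F = set0 -> B1 \subset F -> B2 \subset F ->
  B1 :&: B2 = set0 ->
  ch F = ch (F :|: A) - ch (A :|: B1) - ch (A :|: B2) + ch ((A :|: B1) :|: (A :|: B2)).
Proof.
move=> hAF s1 s2 d12; apply/ffunP => f; rewrite !ffunE !inE.
set g := val f.
have hA : g \in A -> g \notin F.
  by move=> ha; apply/negP=> hf; move/setP: hAF => /(_ g); rewrite !inE ha hf.
have h1 : g \in B1 -> g \in F by move/(subsetP s1).
have h2 : g \in B2 -> g \in F by move/(subsetP s2).
have h12 : g \in B1 -> g \notin B2.
  by move=> ha; apply/negP=> hb; move/setP: d12 => /(_ g); rewrite !inE ha hb.
case: (boolP (g \in A)) => ga; case: (boolP (g \in F)) => gf;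
  case: (boolP (g \in B1)) => g1; case: (boolP (g \in B2)) => g2 /=;
  rewrite ?orbT ?orbF ?andbT /=;
  try (by move: (hA ga); rewrite gf);
  try (by move: (h1 g1); rewrite (negbTE gf));
  try (by move: (h2 g2); rewrite (negbTE gf));
  try (by move: (h12 g1); rewrite g2).
all: (simpl; ring).
Qed.


Lemma tec0 : tec_edge_set E set0.
Proof. by exists set0; split; [split; [apply: sub0set | move=> f; rewrite inE] | left]. Qed.

Lemma ch0 : ch set0 = 0.
Proof. by apply/ffunP=> f; rewrite !ffunE inE. Qed.

Lemma tec_span F : tec_edge_set E F -> ch F \in U.
Proof.
move=> htec; case: (htec) => W [[hFE hFW] h2].
case: (boolP (val e \in F)) => heF; first by apply: De_span.
case: (boolP (F == set0)) => [/eqP->|hF0]; first by rewrite ch0 mem0v.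
have hszF : forall f, f \in F -> #|f| = 2%N by move=> f /(subsetP hFE); apply: hszE.
have hW : W != set0.
  case/set0Pn: hF0 => f0 hf0.
  have /eqP/cards2P [u [v [_ hu]]] := hszF f0 hf0.
  by apply/set0Pn; exists u; apply: (subsetP (hFW _ hf0)); rewrite hu set21.
have hTE := tec_TE h2 hW hFW.
case: (ear hnbE hszE hcE hTE hFE (valP e) heF) => A [x [y [[hAE hAF heA hx hy] JA]]].
case: (menger2 hTE hszF hx hy) => B1 [B2 [s1 s2 d12 J1 J2]].
have JF := TE_J hTE hx hy.
have dAB : forall B : {set {set T}}, B \subset F -> A :&: B = set0.
  move=> B hB; apply/setP=> f; rewrite !inE; apply/negP=> /andP[ha hb].
  by move/setP: hAF => /(_ f); rewrite !inE ha (subsetP hB f hb).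
have T0 := J_TE JF JA (_ : F :&: A = set0).
rewrite setIC in T0; have {}T0 := T0 hAF.
have T1 := J_TE JA J1 (dAB B1 s1).
have T2 := J_TE JA J2 (dAB B2 s2).
have hxW : forall (K : {set {set T}}), x \in verts K :|: [set x; y].
  by move=> K; rewrite !inE eqxx orbT.
have T3 := TE_union T1 T2 (hxW _) (hxW _).
have BE : forall B : {set {set T}}, B \subset F -> A :|: B \subset E.
  by move=> B hB; rewrite subUset hAE (subset_trans hB hFE).
have DeK : forall K W', TE W' K -> K \subset E -> val e \in K -> ch K \in U.
  by move=> K W' hK hKE heK; apply: De_span; split => //; exact: TE_tecE hK hKE.
rewrite (chi_id hAF s1 s2 d12).
apply: memvD; first apply: memvB; first apply: memvB.
- by apply: DeK T0 _ _; rewrite ?subUset ?hFE ?hAE // inE heA orbT.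
- by apply: DeK T1 (BE _ s1) _; rewrite inE heA.
- by apply: DeK T2 (BE _ s2) _; rewrite inE heA.
- apply: DeK T3 _ _; first by rewrite subUset !BE.
  by rewrite !inE heA.
Qed.


Definition Pset := @TECSP R T E.
Definition face := fun x : V => Pset x /\ x e = 1.

Lemma P_U x : Pset x -> x \in U.
Proof.
case=> lam [h0 hn h1 ->]; apply: memv_suml => F _.
case: (pbP (tec_edge_set E F)) => hF.
  by apply: memvZ; apply: tec_span.
by rewrite (hn F hF) scale0r mem0v.
Qed.

Lemma ch_P F : tec_edge_set E F -> Pset (ch F).
Proof.
move=> hF; exists (fun G => if G == F then 1 else 0); split.
- by move=> G; case: (G == F).
- by move=> G hG; case: eqP => // hGF; rewrite hGF in hG.
- by rewrite (bigD1 F) //= eqxx big1 ?addr0 // => G /negbTE ->.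
- rewrite (bigD1 F) //= eqxx scale1r big1 ?addr0 // => G /negbTE ->.
  by rewrite scale0r.
Qed.

Lemma zero_P : Pset 0.
Proof. by rewrite -ch0; apply: ch_P; apply: tec0. Qed.

Lemma S_face y : y \in S -> face y.
Proof.
case/mapP => F; rewrite mem_enum inE => /pbP [hF heF] ->; split.
  exact: ch_P.
by rewrite /ch /chi ffunE heF.
Qed.

Lemma valid x : Pset x -> x e <= 1.
Proof.
case=> lam [h0 hn h1 ->]; rewrite sum_ffunE -h1; apply: ler_sum => F _.
have hs : forall (a : R) (b : R^o), a *: b = a * b by [].
rewrite ffunE /chi ffunE hs; case: (_ \in _); rewrite ?mulr1 ?mulr0 ?h0 //.
Qed.


Definition ext0 n (q : 'I_n -> V) : 'I_n.+1 -> V :=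
  fun i => if unlift ord0 i is Some j then q j else 0.

Lemma ext0_lift n (q : 'I_n -> V) j : ext0 q (lift ord0 j) = q j.
Proof. by rewrite /ext0 liftK. Qed.

Lemma ext0_0 n (q : 'I_n -> V) : ext0 q ord0 = 0.
Proof. by rewrite /ext0 unlift_none. Qed.

Lemma ext0_pts n (q : 'I_n -> V) : (forall i, face (q i)) -> forall i, Pset (ext0 q i).
Proof.
move=> hq i; case: (unliftP ord0 i) => [j ->|->].
  by rewrite ext0_lift; case: (hq j).
by rewrite ext0_0; exact: zero_P.
Qed.

Lemma aff_ext_lin n (q : 'I_n -> V) :
  (forall c, \sum_i c i *: q i = 0 -> forall i, c i = 0) -> aff_indep (ext0 q).
Proof.
move=> h c hs hv.
rewrite big_ord_recl ext0_0 scaler0 add0r in hv.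
have hv' : \sum_(j < n) c (lift ord0 j) *: q j = 0.
  by rewrite -[RHS]hv; apply: eq_bigr => j _; rewrite ext0_lift.
have hc := h _ hv'.
have hc0 : c ord0 = 0.
  by move: hs; rewrite big_ord_recl big1 ?addr0 // => j _; rewrite hc.
by move=> i; case: (unliftP ord0 i) => [j ->|->].
Qed.

Lemma aff_ext_face n (q : 'I_n -> V) :
  aff_indep q -> (forall i, q i e = 1) -> aff_indep (ext0 q).
Proof.
move=> h he1 c hs hv.
rewrite big_ord_recl ext0_0 scaler0 add0r in hv.
have hv' : \sum_(j < n) c (lift ord0 j) *: q j = 0.
  by rewrite -[RHS]hv; apply: eq_bigr => j _; rewrite ext0_lift.
have hs' : \sum_(j < n) c (lift ord0 j) = 0.
  have := congr1 (fun f : V => f e) hv'; rewrite sum_ffunE ffunE => hE.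
  rewrite -[RHS]hE; apply: eq_bigr => j _; rewrite ffunE he1.
  by rewrite [_ *: _]mulr1.
have hc := h _ hs' hv'.
have hc0 : c ord0 = 0.
  by move: hs; rewrite big_ord_recl big1 ?addr0 // => j _; rewrite hc.
by move=> i; case: (unliftP ord0 i) => [j ->|->].
Qed.

Lemma noP : ~ has_aff_indep Pset (\dim U).+2.
Proof.
case=> p [hP hai].
pose q (j : 'I_(\dim U).+1) := p (lift ord0 j) - p ord0.
have hlin : forall c, \sum_j c j *: q j = 0 -> forall j, c j = 0.
  move=> c hc.
  pose c' (i : 'I_(\dim U).+2) := if unlift ord0 i is Some j then c j else - \sum_j c j.
  have hc'l : forall j, c' (lift ord0 j) = c j by move=> j; rewrite /c' liftK.
  have hc'0 : c' ord0 = - \sum_j c j by rewrite /c' unlift_none.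
  have h1 : \sum_i c' i = 0.
    rewrite big_ord_recl hc'0 [X in _ + X](eq_bigr (fun j => c j)).
      exact: addNr.
    by move=> j _; exact: hc'l.
  have h2 : \sum_i c' i *: p i = \sum_j c j *: q j.
    rewrite big_ord_recl hc'0 [X in _ + X](eq_bigr (fun j => c j *: p (lift ord0 j))); last first.
      by move=> j _; rewrite hc'l.
    rewrite /q; under [in RHS]eq_bigr => j _ do rewrite scalerBr.
    by rewrite sumrB addrC scaleNr scaler_suml.
  rewrite hc in h2; move=> j; rewrite -hc'l; exact: hai c' h1 h2 _.
have hf := lin_free hlin.
have hsub : {subset [tuple q j | j < (\dim U).+1] <= U}.
  move=> a /tnthP [j ->]; rewrite tnth_mktuple /q.
  by apply: memvB; apply: P_U.
by have := free_size_dim hf hsub; rewrite size_tuple ltnn.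
Qed.

Lemma noFace : ~ has_aff_indep face (\dim U).+1.
Proof.
case=> q [hq hai]; apply: noP; exists (ext0 q); split.
  exact: ext0_pts.
by apply: aff_ext_face => // i; case: (hq i).
Qed.

Lemma yesY : exists Y, [/\ free Y, {subset Y <= S} & size Y = \dim U].
Proof.
case: (extract S) => Y [hf hs hsp]; exists Y; split => //.
rewrite -(eqnP hf); apply/eqP; rewrite eqn_leq dimvS //=.
  by apply: dimvS.
exact: sub_span.
Qed.

Lemma yesFace : has_aff_indep face (\dim U).
Proof.
case: yesY => Y [hf hs <-].
exists (fun i : 'I_(size Y) => Y`_i); split.
  by move=> i; apply: S_face; apply: hs; apply: mem_nth.
by move=> c _; apply: free_lin.
Qed.

Lemma yesP : has_aff_indep Pset (\dim U).+1.
Proof.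
case: yesY => Y [hf hs <-].
exists (ext0 (fun i : 'I_(size Y) => Y`_i)); split.
  by apply: ext0_pts => i; apply: S_face; apply: hs; apply: mem_nth.
by apply: aff_ext_lin; apply: free_lin.
Qed.

End Main.

End Aux.
Import Aux.
Local Open Scope ring_scope.

Theorem mainTheorem6 (R : realFieldType) (T : finType) (E : {set {set T}})
  (hsimple : simple_edges E)
  (h2ec : two_edge_connected [set: T] E)
  (e : edges E) :
  defines_facet (@TECSP R T E) (fun x => x e) 1.
Proof.
split; first by move=> x hx; exact: (valid e hx).
exists (\dim (@U R T E e))%:Z; split.
  exists (\dim (@U R T E e)).+1; split.
    by rewrite -addn1 PoszD addrK.
  split; [exact: yesP | exact: (noP hsimple h2ec)].
exists (\dim (@U R T E e)); split => //.
split; [exact: yesFace | exact: (noFace hsimple h2ec)].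
Qed.
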